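(* Let $d\ge 1$ and let $Z_1,\ldots,Z_d$ be independent standard normal random variables. For $q\in\mathbb{R}$ and $l=(l_1,\ldots,l_d)'\in\mathbb{R}^d$ define $H(q;l)=P\big(\sum_{j=1}^d l_j Z_j^2\le q\big)$, where the probability is with respect to $Z_1,\ldots,Z_d$ only. Let $\lambda=(\lambda_1,\ldots,\lambda_d)'$ be a fixed vector with $\lambda_j>0$ for all $j$. Let $(T_n)$ be any sequence of real-valued random variables, and let $(\hat\lambda_n)$ be a sequence of $\mathbb{R}^d$-valued random vectors (defined on the same probability space as the $T_n$) with $\hat\lambda_n\to\lambda$ in probability. Define $p_n=1-H(T_n;\lambda)$ and $\hat p_n=1-H(T_n;\hat\lambda_n)$. Then $\hat p_n-p_n=\|\hat\lambda_n-\lambda\|\,O_P(1)$, i.e. there exist random variables $B_n$ that are bounded in probability such that $|\hat p_n-p_n|\le \|\hat\lambda_n-\lambda\|\,B_n$; consequently $\hat p_n-p_n\to 0$ in probability.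
   Context: No assumption is made on the distribution of $T_n$. $O_P(1)$ denotes a sequence of random variables that is bounded in probability (tight). *)

(* Defs.v *)
From HB Require Import structures.
From mathcomp Require Import all_boot all_order all_algebra.
From mathcomp Require Import all_classical all_reals all_analysis.
Set Implicit Arguments. Unset Strict Implicit. Unset Printing Implicit Defensive.
Import Order.TTheory GRing.Theory Num.Theory.
Import numFieldNormedType.Exports.
Local Open Scope classical_set_scope.
Local Open Scope ring_scope.

Definition eucl_norm {R : realType} {d : nat} (x : 'I_d -> R) : R :=
  Num.sqrt (\sum_(j < d) x j ^+ 2).

(* Z_1..Z_d : Omega -> R are mutually independent (product rule for the
   joint preimage of every family of Borel sets; taking B_j = setT recovers
   all subfamilies). *)
Definition mutually_independent {R : realType} {dO : measure_display}
  {O : measurableType dO} (Q : probability O R) {d : nat}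
  (Z : 'I_d -> O -> R) : Prop :=
  forall B : 'I_d -> set R, (forall j, measurable (B j)) ->
    Q (\bigcap_(j in [set: 'I_d]) (Z j @^-1` B j)) =
    (\prod_(j < d) Q (Z j @^-1` B j))%E.

Definition std_normal {R : realType} {dO : measure_display}
  {O : measurableType dO} (Q : probability O R) (X : O -> R) : Prop :=
  measurable_fun setT X /\
  forall A : set R, measurable A -> Q (X @^-1` A) = normal_prob 0 1 A.

Definition Hfun {R : realType} {dO : measure_display}
  {O : measurableType dO} (Q : probability O R) {d : nat}
  (Z : 'I_d -> O -> R) (q : R) (l : 'I_d -> R) : R :=
  fine (Q [set w | \sum_(j < d) l j * (Z j w) ^+ 2 <= q]).

Definition cvg_in_prob {R : realType} {dO : measure_display}
  {O : measurableType dO} (P : probability O R)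
  (X : nat -> O -> R) (Y : O -> R) : Prop :=
  forall eps : R, 0 < eps ->
    (fun n => P [set w | eps < `|X n w - Y w|]) @ \oo --> 0%E.

Definition bounded_in_prob {R : realType} {dO : measure_display}
  {O : measurableType dO} (P : probability O R) (B : nat -> O -> R) : Prop :=
  forall eps : R, 0 < eps ->
    exists M : R, forall n, (P [set w | (M < `|B n w|)%R] <= eps%:E)%E.

(* Main.v *)
Require Import Defs.
From HB Require Import structures.
From mathcomp Require Import all_boot all_order all_algebra.
From mathcomp Require Import all_classical all_reals all_analysis.
From mathcomp Require Import measurable_realfun.
From mathcomp Require Import ring lra.
Import Order.TTheory GRing.Theory Num.Theory.
Import numFieldNormedType.Exports.
Local Open Scope classical_set_scope.
Local Open Scope ring_scope.

Section L1.
Context {R : realType}.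

Lemma meas_le_set d (T : measurableType d) (f : T -> R) t :
  measurable_fun setT f -> measurable [set x | f x <= t].
Proof.
move=> mf; have := mf measurableT _ (measurable_itv `]-oo, t]).
rewrite setTI; congr measurable; apply/seteqP; split => x /=; by rewrite in_itv.
Qed.

Lemma meas_sq (a t : R) : measurable [set z : R | (a * z ^+ 2 <= t)%R].
Proof.
apply: meas_le_set; apply: measurable_funM => //.

Qed.

Lemma leb_itv (u v : R) : u <= v -> (lebesgue_measure [set` `[u, v]] <= (v - u)%:E)%E.
Proof.
move=> uv; rewrite lebesgue_measure_itv /=; case: ifP => _ //.
by rewrite lee_fin subr_ge0.
Qed.

Lemma xexp_le1 (y : R) : 0 <= y -> y * expR (- (y ^+ 2) / 2) <= 1.
Proof.
move=> y0.
rewrite mulNr expRN -[leRHS](@divff _ (expR (y ^+ 2 / 2))) ?gt_eqF ?expR_gt0//.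
rewrite ler_pM2r ?invr_gt0 ?expR_gt0//.
apply: le_trans (expR_ge1Dx _).
have : 0 <= (y - 1) ^+ 2 by exact: sqr_ge0.
rewrite sqrrB mulr1 expr1n => h.
have : 0 <= y ^+ 2 by exact: sqr_ge0.
move=> h2.
suff : y * 2 <= 2 + y ^+ 2 by move=> h3; rewrite -(ler_pM2r (_ : 0 < 2)) // mulrDl divfK ?mul1r//.
nra.
Qed.


Lemma normal_sq (a a' t : R) : 0 < a -> a <= a' ->
  (normal_prob 0 1 [set z : R | (a * z ^+ 2 <= t)%R] <=
   normal_prob 0 1 [set z : R | (a' * z ^+ 2 <= t)%R] + (2 * (a' / a - 1))%:E)%E.
Proof.
move=> a0 aa'.
have a'0 : 0 < a' by exact: lt_le_trans aa'.
set S1 := [set z | a * _ <= t]; set S2 := [set z | a' * _ <= t].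
have S21 : S2 `<=` S1.
  by move=> z /=; apply: le_trans; rewrite ler_wpM2r // sqr_ge0.
have mS1 : measurable S1 := meas_sq a t.
have mS2 : measurable S2 := meas_sq a' t.
rewrite -(setDUK S21) measureU //; last 2 first.
- exact: measurableD.
- exact: setDIK.
apply: leeD2l.
set x := Num.sqrt (t / a); set y := Num.sqrt (t / a'); set s := Num.sqrt (a' / a).
have hxy : x = s * y.
  rewrite /x /s /y -sqrtrM ?divr_ge0 ?ltW//; congr Num.sqrt.
  by field; rewrite ?gt_eqF.
have s1 : 1 <= s.
  rewrite /s -sqrtr1 ler_sqrt; last by rewrite divr_ge0 // ltW.
  by rewrite ler_pdivlMr // mul1r.
have y0 : 0 <= y by rewrite sqrtr_ge0.
have yx : y <= x by rewrite hxy ler_peMl.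
set I := [set` `[-x, -y]] `|` [set` `[y, x]].
have mI : measurable I by apply: measurableU; exact: measurable_itv.
have DI : S1 `\` S2 `<=` I.
  move=> z [/= h1 /negP]; rewrite -ltNge => h2.
  have t0 : 0 <= t := le_trans (mulr_ge0 (ltW a0) (sqr_ge0 z)) h1.
  have zx : `|z| <= x.
    rewrite /x -sqrtr_sqr ler_sqrt; last by rewrite divr_ge0 // ltW.
    by rewrite ler_pdivlMr // mulrC.
  have yz : y < `|z|.
    have z20 : 0 < z ^+ 2.
      by have := le_lt_trans t0 h2; rewrite pmulr_rgt0.
    by rewrite /y -sqrtr_sqr ltr_sqrt // ltr_pdivrMr // mulrC.
  case: (lerP 0 z) => z0.
    by right; rewrite /= in_itv /= -(ger0_norm z0) zx (ltW yz).
  left; rewrite /= in_itv /= -[z]opprK lerN2 lerN2 -(ltr0_norm z0).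
  by rewrite zx ltW.
have mD : measurable (S1 `\` S2) by exact: measurableD.
have mpdf : measurable_fun I (fun z => (normal_pdf 0 1 z)%:E).
  by apply/measurable_EFinP; apply: measurable_funTS; exact: measurable_normal_pdf.
rewrite /normal_prob.
have h := ge0_subset_integral lebesgue_measure mD mI mpdf _ DI.
apply: (le_trans (h _)).
  by move=> z _; rewrite lee_fin normal_pdf_ge0.
apply: (@le_trans _ _ (\int[lebesgue_measure]_(z in I) (cst (normal_pdf 0 1 y)%:E) z)%E).
  apply: ge0_le_integral => //.
  - by move=> z _; rewrite lee_fin normal_pdf_ge0.
  move=> z Iz; rewrite lee_fin.
  have yz : y ^+ 2 <= z ^+ 2.
    case: Iz => /=; rewrite in_itv /= => /andP [h1 h2]; nra.
  rewrite !normal_pdfE ?oner_neq0 //= ler_wpM2l ?normal_peak_ge0 //.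
  rewrite /normal_fun ler_expR !subr0 !mulNr lerN2 ler_pM2r //.
rewrite integral_cst //.
have hpk : normal_peak (1:R) <= 1.
  rewrite /normal_peak invf_le1; last first.
    by rewrite sqrtr_gt0 pmulrn_lgt0 // mulr_gt0 ?pi_gt0 // exprn_gt0.
  have h2 : (1 : R) <= 1 ^+ 2 * pi *+ 2.
    rewrite mulr2n expr1n mul1r; have := pi_ge2 R; lra.
  have := ler_wsqrtr h2; rewrite sqrtr1; exact.
have hc : normal_pdf 0 1 y * y <= 1.
  rewrite normal_pdfE ?oner_neq0 //= -mulrA mulr_ile1 ?normal_peak_ge0 //.
  - by rewrite mulr_ge0 // normal_fun_ge0.
  rewrite mulrC /normal_fun subr0 expr1n.
  by have := xexp_le1 y y0; rewrite mulNr.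
have hc0 : 0 <= normal_pdf 0 1 y * y by rewrite mulr_ge0 // normal_pdf_ge0.
apply: (@le_trans _ _ ((normal_pdf 0 1 y)%:E * ((x - y)%R%:E + (x - y)%R%:E))%E).
  apply: lee_wpmul2l; first by rewrite lee_fin normal_pdf_ge0.
  have := measureU2 lebesgue_measure (measurable_itv `[-x, -y]) (measurable_itv `[y, x]).
  move/le_trans; apply.
  apply: leeD.
    have h1 : -x <= -y by rewrite lerN2.
    by apply: le_trans (leb_itv _ _ h1) _; rewrite opprK addrC.
  exact: leb_itv.
rewrite -EFinD -EFinM lee_fin hxy.
have -> : normal_pdf 0 1 y * (s * y - y + (s * y - y)) =
  2 * (s - 1) * (normal_pdf 0 1 y * y) by ring.
have ss : a' / a = s ^+ 2 by rewrite sqr_sqrtr // divr_ge0 // ltW.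
rewrite ss; nra.
Qed.
Lemma meas_lt_set d (T : measurableType d) (f : T -> R) t :
  measurable_fun setT f -> measurable [set x | t < f x].
Proof.
move=> mf; have := mf measurableT _ (measurable_itv `]t, +oo[).
rewrite setTI; congr measurable; apply/seteqP; split => x /=; by rewrite in_itv /= andbT.
Qed.

End L1.

Section PF.
Context {R : realType} {d1 d2} {T1 : measurableType d1} {T2 : measurableType d2}.
Variables (P : probability T1 R) (f : T1 -> T2) (mf : measurable_fun [set: T1] f).
Let map := pushforward P f.
Let map0 : map set0 = 0%E. Proof. by rewrite /map /pushforward preimage_set0 measure0. Qed.
Let map_ge0 A : (0 <= map A)%E. Proof. exact: measure_ge0. Qed.
Let map_sigma_additive : semi_sigma_additive map.
Proof.
move=> F mF tF mUF; rewrite /map /pushforward preimage_bigcup.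
apply: measure_semi_sigma_additive.
- by move=> n; rewrite -[X in measurable X]setTI; exact: mf.
- apply/trivIsetP => /= i j _ _ ij; rewrite -preimage_setI.
  by move/trivIsetP : tF => /(_ _ _ _ _ ij) ->//; rewrite preimage_set0.
- by rewrite -preimage_bigcup -[X in measurable X]setTI; exact: mf.
Qed.
HB.instance Definition _ := isMeasure.Build _ _ _ map map0 map_ge0 map_sigma_additive.
Let map_setT : map [set: T2] = 1%E.
Proof. by rewrite /map /pushforward preimage_setT probability_setT. Qed.
HB.instance Definition _ := Measure_isProbability.Build _ _ _ map map_setT.
Definition pprob : probability T2 R := map.
Lemma pprobE A : pprob A = P (f @^-1` A). Proof. by []. Qed.
End PF.
Arguments pprob {R d1 d2 T1 T2} P {f} mf.

Section NP.
Context {R : realType}.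
Definition nprob (A : set R) : \bar R := normal_prob 0 1 A.
Let nprob0 : nprob set0 = 0%E. Proof. exact: measure0. Qed.
Let nprob_ge0 A : (0 <= nprob A)%E. Proof. exact: measure_ge0. Qed.
Let nprob_sa : semi_sigma_additive nprob.
Proof. exact: (@measure_semi_sigma_additive _ _ _ (@normal_prob R 0 1)). Qed.
HB.instance Definition _ := isMeasure.Build _ _ _ nprob nprob0 nprob_ge0 nprob_sa.
Let nprob_setT : nprob [set: R] = 1%E.
Proof. exact: probability_setT. Qed.
HB.instance Definition _ := Measure_isProbability.Build _ _ _ nprob nprob_setT.
End NP.

Section Indep.
Context {R : realType} {dZ : measure_display} {OZ : measurableType dZ}
  (Q : probability OZ R) {d : nat} (Z : 'I_d -> OZ -> R).
Hypothesis mZ : forall j, measurable_fun setT (Z j).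
Hypothesis hZi : mutually_independent Q Z.

Definition Gk (k : 'I_d) : set (set OZ) :=
  [set E | exists B : 'I_d -> set R, (forall j, measurable (B j)) /\ B k = setT /\
     E = \bigcap_(j in [set: 'I_d]) Z j @^-1` B j].

Lemma bigcapZ_meas (B : 'I_d -> set R) : (forall j, measurable (B j)) ->
  measurable (\bigcap_(j in [set: 'I_d]) Z j @^-1` B j).
Proof.
move=> mB; apply: fin_bigcap_measurable; first exact: finite_finset.
by move=> j _; rewrite -[X in measurable X]setTI; apply: mZ.
Qed.

Lemma Gk_meas k : Gk k `<=` measurable.
Proof. by move=> E [B [mB [_ ->]]]; exact: bigcapZ_meas. Qed.

Lemma Gk_setT k : Gk k setT.
Proof.
exists (fun _ => setT); split => //; split => //.
by apply/seteqP; split => v //= _ j _.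
Qed.

Lemma Gk_setI k : setI_closed (Gk k).
Proof.
move=> E F [B [mB [Bk ->]]] [C [mC [Ck ->]]].
exists (fun j => B j `&` C j); split; first by move=> j; exact: measurableI.
split; first by rewrite Bk Ck setIT.
apply/seteqP; split => v /=.
  by move=> [h1 h2] j _; split; [exact: h1|exact: h2].
by move=> h; split => j _; have [] := h j I.
Qed.


Lemma indep_lift k (A : set R) (mA : measurable A) (E : set OZ) :
  <<s Gk k >> E -> Q (E `&` Z k @^-1` A) = (Q E * Q (Z k @^-1` A))%E.
Proof.
have mZA : measurable (Z k @^-1` A).
  by rewrite -[X in measurable X]setTI; apply: mZ.
have q0 : 0 <= fine (Q (Z k @^-1` A)) by rewrite fine_ge0.
pose r := NngNum q0.
have m2E F : mscale r Q F = (Q F * Q (Z k @^-1` A))%E.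
  rewrite /mscale /= fineK ?fin_num_measure // muleC //.
move=> sE; rewrite -m2E.
apply: (@g_sigma_algebra_measure_unique _ R OZ (Gk k) (@Gk_meas k) (fun _ => setT)
  (fun _ => Gk_setT k) _ (mrestr Q mZA) (mscale r Q) (@Gk_setI k) _ _ E sE).
- by rewrite bigcup_const.
- move=> F [B [mB [Bk ->]]].
  change (Q ((\bigcap_(j in [set: 'I_d]) Z j @^-1` B j) `&` Z k @^-1` A) =
    ((fine (Q (Z k @^-1` A)))%:E * Q (\bigcap_(j in [set: 'I_d]) Z j @^-1` B j)))%E.
  rewrite fineK ?fin_num_measure // [X in _ = X]muleC.
  pose B' j := if j == k then A else B j.
  have mB' j : measurable (B' j) by rewrite /B'; case: ifP.
  have -> : (\bigcap_(j in [set: 'I_d]) Z j @^-1` B j) `&` Z k @^-1` A =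
            \bigcap_(j in [set: 'I_d]) Z j @^-1` B' j.
    apply/seteqP; split => v /=.
      move=> [h1 h2] j _; rewrite /B'; case: eqP => [->|_] //; exact: h1.
    move=> h; split.
      move=> j _; have := h j I; rewrite /B'; case: eqP => [->|_] //.
      by rewrite Bk.
    by have := h k I; rewrite /B' eqxx.
  rewrite hZi // hZi // (bigD1 k) //= [in RHS](bigD1 k) //= /B' eqxx Bk.
  rewrite preimage_setT probability_setT mul1e [in RHS]muleC; congr (_ * _)%E.
  by apply: eq_bigr => j /negbTE ->.
- move=> n; change (Q (setT `&` Z k @^-1` A) < +oo)%E.
  by rewrite setTI (le_lt_trans (probability_le1 _ _)) ?ltry.
Qed.

Hypothesis hZn : forall j, std_normal Q (Z j).

Lemma pair_law k (f : OZ -> R)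
  (mfk : measurable_fun (setT : set (g_sigma_algebraType (Gk k))) f)
  (mf : measurable_fun setT f) (X : set (R * R)) : measurable X ->
  Q ((fun v => (f v, Z k v)) @^-1` X) = ((pprob Q mf) \x nprob)%E X.
Proof.
move=> mX.
have mp := measurable_fun_pair mf (mZ k).
rewrite -(pprobE Q _ mp); symmetry.
apply: product_measure_unique => // A B mA mB.
change (Q ((fun v => (f v, Z k v)) @^-1` (A `*` B)) = (Q (f @^-1` A) * nprob B)%E).
have -> : (fun v => (f v, Z k v)) @^-1` (A `*` B) = f @^-1` A `&` Z k @^-1` B by [].
rewrite indep_lift //; last first.
  by have := mfk measurableT _ mA; rewrite setTI.
by have [_ ->] := hZn k.
Qed.

Lemma step_ineq k (f : OZ -> R)
  (mfk : measurable_fun (setT : set (g_sigma_algebraType (Gk k))) f)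
  (mf : measurable_fun setT f) (a a' q : R) : 0 < a -> a <= a' ->
  (Q [set v | (a * Z k v ^+ 2 + f v <= q)%R] <=
   Q [set v | (a' * Z k v ^+ 2 + f v <= q)%R] + (2 * (a' / a - 1))%:E)%E.
Proof.
move=> a0 aa'.
have hD c : measurable [set p : R * R | c * p.2 ^+ 2 + p.1 <= q].
  apply: meas_le_set; apply: measurable_funD => //.
  apply: measurable_funM => //; apply: measurable_funX; exact: measurable_snd.
have eQ c : Q [set v | (c * Z k v ^+ 2 + f v <= q)%R] =
    ((pprob Q mf) \x nprob)%E [set p : R * R | c * p.2 ^+ 2 + p.1 <= q].
  by rewrite -(pair_law k f mfk mf _ (hD c)).
have xs c r : xsection [set p : R * R | c * p.2 ^+ 2 + p.1 <= q] r =
    [set z | c * z ^+ 2 <= q - r].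
  apply/seteqP; split => z; rewrite /xsection /= inE /=; by rewrite lerBrDr.
rewrite !eQ.
change (\int[pprob Q mf]_r (nprob \o xsection [set p : R * R | (a * p.2 ^+ 2 + p.1 <= q)%R]) r <=
  \int[pprob Q mf]_r (nprob \o xsection [set p : R * R | (a' * p.2 ^+ 2 + p.1 <= q)%R]) r
  + (2 * (a' / a - 1))%:E)%E.
have mg c : measurable_fun setT (nprob \o xsection [set p : R * R | (c * p.2 ^+ 2 + p.1 <= q)%R]).
  exact: measurable_fun_xsection.
have c0 : 0 <= 2 * (a' / a - 1).
  by rewrite mulr_ge0 // subr_ge0 ler_pdivlMr // mul1r.
apply: (@le_trans _ _ (\int[pprob Q mf]_r ((nprob \o xsection [set p : R * R | (a' * p.2 ^+ 2 + p.1 <= q)%R]) r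
   + cst (2 * (a' / a - 1))%:E r)))%E.
  apply: ge0_le_integral => //.
  - exact: emeasurable_funD.
  - move=> r _; rewrite /= !xs; exact: normal_sq.
rewrite ge0_integralD //.
rewrite integral_cst //; apply: leeD2l.
rewrite -[X in (_ <= X)%E]mule1; apply: lee_wpmul2l; first by rewrite lee_fin.
exact: probability_le1.
Qed.

Definition Sf (c : 'I_d -> R) (v : OZ) := \sum_(j < d) c j * Z j v ^+ 2.

Lemma Sf_ext c c' : c =1 c' -> Sf c = Sf c'.
Proof. by move=> h; apply/funext => v; apply: eq_bigr => j _; rewrite h. Qed.

Lemma measurable_Sf c : measurable_fun setT (Sf c).
Proof.
apply: measurable_sum => j; apply: measurable_funM => //.
exact: measurable_funX.
Qed.

Lemma mZk k j : j != k ->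
  measurable_fun (setT : set (g_sigma_algebraType (Gk k))) (Z j).
Proof.
move=> jk _ B mB; apply: sub_sigma_algebra.
exists (fun i => if i == j then B else setT); split.
  by move=> i; case: ifP.
split; first by rewrite eq_sym (negbTE jk).
apply/seteqP; split => v /=.
  by move=> [_ h] i _; case: eqP => [->|] //.
by move=> h; split => //; have := h j I; rewrite eqxx.
Qed.

Lemma mrest k (c : 'I_d -> R) :
  measurable_fun (setT : set (g_sigma_algebraType (Gk k)))
    (fun v => \sum_(j < d | j != k) c j * Z j v ^+ 2).
Proof.
have -> : (fun v => \sum_(j < d | j != k) c j * Z j v ^+ 2) =
    (fun v => \sum_(j < d) (if j != k then c j * Z j v ^+ 2 else 0)).
  by apply/funext => v; rewrite big_mkcond.
apply: measurable_sum => j.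
have [jk|jk] := boolP (j != k); last exact: measurable_cst.
apply: measurable_funM => //; apply: measurable_funX; exact: mZk.
Qed.

Lemma mrest' k (c : 'I_d -> R) :
  measurable_fun setT (fun v => \sum_(j < d | j != k) c j * Z j v ^+ 2).
Proof.
have -> : (fun v => \sum_(j < d | j != k) c j * Z j v ^+ 2) =
    (fun v => \sum_(j < d) (if j != k then c j * Z j v ^+ 2 else 0)).
  by apply/funext => v; rewrite big_mkcond.
apply: measurable_sum => j.
have [jk|jk] := boolP (j != k); last exact: measurable_cst.
apply: measurable_funM => //; exact: measurable_funX.
Qed.

Lemma step_vec (c : 'I_d -> R) k (a a' q : R) : 0 < a -> a <= a' ->
  (Q [set v | (Sf (fun j => if j == k then a else c j) v <= q)%R] <=
   Q [set v | (Sf (fun j => if j == k then a' else c j) v <= q)%R]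
     + (2 * (a' / a - 1))%:E)%E.
Proof.
move=> a0 aa'.
have eS b v : Sf (fun j => if j == k then b else c j) v =
    b * Z k v ^+ 2 + \sum_(j < d | j != k) c j * Z j v ^+ 2.
  rewrite /Sf (bigD1 k) //= eqxx; congr (_ + _).
  by apply: eq_bigr => j /negbTE ->.
have -> : [set v | (Sf (fun j => if j == k then a else c j) v <= q)%R] =
  [set v | (a * Z k v ^+ 2 + \sum_(j < d | j != k) c j * Z j v ^+ 2 <= q)%R].
  by apply/seteqP; split => v /=; rewrite eS.
have -> : [set v | (Sf (fun j => if j == k then a' else c j) v <= q)%R] =
  [set v | (a' * Z k v ^+ 2 + \sum_(j < d | j != k) c j * Z j v ^+ 2 <= q)%R].
  by apply/seteqP; split => v /=; rewrite eS.
exact: (step_ineq k _ (mrest k c) (mrest' k c)).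
Qed.

Lemma chain (m M : 'I_d -> R) (K q : R) :
  (forall j, 0 < m j) -> (forall j, m j <= M j) ->
  (forall j, 2 * (M j / m j - 1) <= K) -> 0 <= K ->
  (Q [set v | (Sf m v <= q)%R] <= Q [set v | (Sf M v <= q)%R] + (d%:R * K)%:E)%E.
Proof.
move=> m0 mM hK K0.
pose vv (i : nat) := fun j : 'I_d => if (j < i)%N then M j else m j.
suff H i : (Q [set v | (Sf m v <= q)%R] <= Q [set v | (Sf (vv i) v <= q)%R] + (i%:R * K)%:E)%E.
  have := H d; rewrite (@Sf_ext (vv d) M) //.
  by move=> j; rewrite /vv ltn_ord.
elim: i => [|i IH].
  rewrite mul0r adde0 (@Sf_ext (vv 0%N) m) //.
case: (ltnP i d) => id.
  pose k := Ordinal id.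
  apply: (le_trans IH).
  have e1 : vv i =1 (fun j => if j == k then m k else vv i j).
    by move=> j; case: eqP => [->|] //; rewrite /vv /= ltnn.
  have e2 : vv i.+1 =1 (fun j => if j == k then M k else vv i j).
    move=> j; rewrite /vv; case: eqP => [->|/eqP jk] /=; first by rewrite ltnSn.
    rewrite ltnS leq_eqVlt; case: eqP => // ji.
    by exfalso; move/eqP: jk; apply; apply/val_inj.
  rewrite (Sf_ext _ _ e1) (Sf_ext _ _ e2).
  apply: le_trans (leeD2r _ (step_vec (vv i) k (m k) (M k) q (m0 k) (mM k))) _.
  rewrite -addeA leeD2l // -EFinD lee_fin -[i.+1]addn1 natrD mulrDl mul1r.
  by have := hK k; lra.
apply: (le_trans IH).
rewrite (@Sf_ext (vv i.+1) (vv i)).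
  by rewrite leeD2l // lee_fin ler_wpM2r // ler_nat.
move=> j; rewrite /vv.
by rewrite (leq_trans (ltn_ord j) id) (leq_trans (ltn_ord j) (leqW id)).
Qed.

Definition hq (c : 'I_d -> R) (q : R) := fine (Q [set v | (Sf c v <= q)%R]).

Lemma mSf_set c q : measurable [set v | (Sf c v <= q)%R].
Proof. exact: meas_le_set (measurable_Sf c). Qed.

Lemma hq_fin c q : Q [set v | (Sf c v <= q)%R] \is a fin_num.
Proof. by rewrite fin_num_measure //; exact: mSf_set. Qed.

Lemma hq_ge0 c q : 0 <= hq c q.
Proof. by rewrite /hq fine_ge0 // measure_ge0. Qed.

Lemma hq_le1 c q : hq c q <= 1.
Proof.
rewrite /hq -lee_fin fineK ?hq_fin //; exact: probability_le1 (mSf_set c q).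
Qed.

Lemma hq_mono (c c' : 'I_d -> R) q : (forall j, c j <= c' j) -> hq c' q <= hq c q.
Proof.
move=> cc'; rewrite /hq fine_le ?hq_fin //; apply: le_measure; rewrite ?inE; try exact: mSf_set.
move=> v /=; apply: le_trans; rewrite /Sf; apply: ler_sum => j _.
by rewrite ler_wpM2r // sqr_ge0.
Qed.

Lemma hq_chain (m M : 'I_d -> R) (K q : R) :
  (forall j, 0 < m j) -> (forall j, m j <= M j) ->
  (forall j, 2 * (M j / m j - 1) <= K) -> 0 <= K ->
  hq m q <= hq M q + d%:R * K.
Proof.
move=> m0 mM hK K0; have := chain m M K q m0 mM hK K0.
by rewrite -(fineK (hq_fin m q)) -(fineK (hq_fin M q)) -EFinD lee_fin.
Qed.

Lemma hq_Hfun c q : Hfun Q Z q c = hq c q.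
Proof. by []. Qed.

Lemma lipschitz (lam : 'I_d -> R) : (0 < d)%N -> (forall j, 0 < lam j) ->
  exists C, 0 <= C /\ forall q (l : 'I_d -> R),
    `|hq l q - hq lam q| <= C * eucl_norm (fun j => l j - lam j).
Proof.
move=> hd hlam.
pose S := \sum_(j < d) (lam j)^-1.
have Sge j : (lam j)^-1 <= S.
  rewrite /S (bigD1 j) //= ler_wpDr // sumr_ge0 // => i _.
  by rewrite invr_ge0 ltW.
have S0 : 0 < S.
  by apply: lt_le_trans (Sge (Ordinal hd)); rewrite invr_gt0.
pose lmin := S^-1.
have lmin0 : 0 < lmin by rewrite invr_gt0.
have lminle j : lmin <= lam j.
  rewrite /lmin -[lam j]invrK lef_pV2 ?posrE ?invr_gt0 //.
exists ((8 * d%:R + 2) / lmin); split.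
  by rewrite divr_ge0 // ?ltW // addr_ge0 // mulr_ge0.
move=> q l; rewrite -/(eucl_norm _).
pose n : R := eucl_norm (fun j => l j - lam j).
rewrite -/n.
have n0 : 0 <= n by rewrite sqrtr_ge0.
have comp j : `|l j - lam j| <= n.
  rewrite /n /eucl_norm -sqrtr_sqr ler_sqrt; last first.
    by rewrite sumr_ge0 // => i _; rewrite sqr_ge0.
  by rewrite (bigD1 j) //= ler_wpDr // sumr_ge0 // => i _; rewrite sqr_ge0.
pose r : R := n / lmin.
have r0 : 0 <= r by rewrite divr_ge0 // ltW.
have CE : (8 * d%:R + 2) / lmin * n = 8 * d%:R * r + 2 * r.
  by rewrite /r; field; rewrite gt_eqF.
have d0 : 0 <= d%:R :> R by [].
rewrite CE.
have h01 c : 0 <= hq c q <= 1 by rewrite hq_ge0 hq_le1.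
case: (lerP n (lmin / 2)) => hn.
  have r12 : r <= 1 / 2 by rewrite /r ler_pdivrMr //; lra.
  have r1 : (0:R) < 1 - r by lra.
  have r2 : (1:R) - r <= 1 + r by lra.
  pose m j : R := lam j * (1 - r).
  pose M j : R := lam j * (1 + r).
  have rl j : n <= r * lam j.
    by rewrite /r -mulrA ler_peMr // mulrC ler_pdivlMr // mul1r.
  have m0 j : 0 < m j by exact: mulr_gt0 (hlam j) r1.
  have mM j : m j <= M j by rewrite /m /M ler_wpM2l // ltW.
  have em j : m j = lam j - r * lam j by rewrite /m; ring.
  have eM j : M j = lam j + r * lam j by rewrite /M; ring.
  have lb j : m j <= l j.
    have := comp j; rewrite ler_norml => /andP [h1 _].
    have h1' : - n <= l j - lam j :> R := h1.
    have := rl j; rewrite em; lra.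
  have ub j : l j <= M j.
    have := comp j; rewrite ler_norml => /andP [_ h1].
    have h1' : l j - lam j <= n :> R := h1.
    have := rl j; rewrite eM; lra.
  have rl0 j : 0 <= r * lam j by rewrite mulr_ge0 // ltW.
  have lamm j : m j <= lam j by rewrite em; have := rl0 j; lra.
  have lamM j : lam j <= M j by rewrite eM; have := rl0 j; lra.
  have hK j : 2 * (M j / m j - 1) <= 8 * r.
    have -> : M j / m j = (1 + r) / (1 - r).
      rewrite /M /m; field; apply/andP; split; rewrite ?gt_eqF //.
    have -> : 2 * ((1 + r) / (1 - r) - 1) = 4 * r / (1 - r).
      by field; rewrite gt_eqF.
    rewrite ler_pdivrMr //.
    have h : (4:R) * r <= 8 * r * (1 - r) by nra.
    exact: h.
  have K0 : (0:R) <= 8 * r by lra.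
  have ch := hq_chain _ _ _ q m0 mM hK K0.
  have h1 := hq_mono _ _ q lb. have h2 := hq_mono _ _ q ub.
  have h3 := hq_mono _ _ q lamm. have h4 := hq_mono _ _ q lamM.
  have dr : (0:R) <= d%:R * (8 * r) by rewrite mulr_ge0.
  have g : `|hq l q - hq lam q| <= d%:R * (8 * r).
    rewrite ler_norml; apply/andP; split; lra.
  apply: le_trans g _.
  have h : d%:R * (8 * r) <= 8 * d%:R * r + 2 * r :> R by nra.
  exact: h.
have r12 : 1 / 2 < r by rewrite /r ltr_pdivlMr //; lra.
have := h01 l; have := h01 lam.
move=> /andP [a1 a2] /andP [b1 b2].
have g : `|hq l q - hq lam q| <= 1.
  rewrite ler_norml; apply/andP; split; lra.
apply: le_trans g _.
have h : (1:R) <= 8 * d%:R * r + 2 * r by nra.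
exact: h.
Qed.

Lemma measurable_H {dO} {O : measurableType dO} (g : O -> R) (L : O -> 'I_d -> R) :
  measurable_fun setT g -> (forall j, measurable_fun setT (fun w => L w j)) ->
  measurable_fun setT (fun w => Hfun Q Z (g w) (L w)).
Proof.
move=> mg mL.
pose F (p : O * OZ) := \sum_(j < d) L p.1 j * Z j p.2 ^+ 2 - g p.1.
have mF : measurable_fun setT F.
  apply: measurable_funB; last exact: measurableT_comp mg measurable_fst.
  apply: measurable_sum => j; apply: measurable_funM.
    exact: measurableT_comp (mL j) measurable_fst.
  apply: measurable_funX; exact: measurableT_comp (mZ j) measurable_snd.
have mA := meas_le_set _ _ _ 0 mF.
have h := @measurable_fun_xsection _ _ O OZ R Q _ mA.
have -> : (fun w => Hfun Q Z (g w) (L w)) = fine \o (Q \o xsection [set x | F x <= 0]).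
  apply/funext => w; rewrite /Hfun /=; congr (fine (Q _)).
  by apply/seteqP; split => v; rewrite /xsection /= inE /= /F subr_le0.
exact: measurableT_comp (fine_measurable measurableT) h.
Qed.

End Indep.

Theorem theorem1 (R : realType) (d : nat) (hd : (0 < d)%N)
  (dZ : measure_display) (OZ : measurableType dZ) (Q : probability OZ R)
  (Z : 'I_d -> OZ -> R)
  (hZn : forall j, std_normal Q (Z j)) (hZi : mutually_independent Q Z)
  (lam : 'I_d -> R) (hlam : forall j, 0 < lam j)
  (dO : measure_display) (O : measurableType dO) (P : probability O R)
  (T : nat -> O -> R) (hT : forall n, measurable_fun setT (T n))
  (lamh : nat -> O -> 'I_d -> R)
  (hlamh : forall n j, measurable_fun setT (fun w => lamh n w j))
  (hcvg : cvg_in_prob P (fun n w => eucl_norm (fun j => lamh n w j - lam j))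
            (fun _ => 0)) :
  let p := fun n w => 1 - Hfun Q Z (T n w) lam in
  let ph := fun n w => 1 - Hfun Q Z (T n w) (lamh n w) in
  (exists B : nat -> O -> R,
     (forall n, measurable_fun setT (B n)) /\
     bounded_in_prob P B /\
     (forall n w, `|ph n w - p n w| <=
                  eucl_norm (fun j => lamh n w j - lam j) * B n w))
  /\ cvg_in_prob P (fun n w => ph n w - p n w) (fun _ => 0).
Proof.
move=> p ph.
have mZ j : measurable_fun setT (Z j) := (hZn j).1.
have [C [C0 hC]] := lipschitz Q Z mZ hZi hZn lam hd hlam.
have key n w : `|ph n w - p n w| <= C * eucl_norm (fun j => lamh n w j - lam j).
  have := hC (T n w) (lamh n w).
  rewrite -!hq_Hfun /ph /p.
  have -> : 1 - Hfun Q Z (T n w) (lamh n w) - (1 - Hfun Q Z (T n w) lam) =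
    - (Hfun Q Z (T n w) (lamh n w) - Hfun Q Z (T n w) lam) by ring.
  by rewrite normrN.
split.
  exists (fun _ _ => C); split; first by move=> n; exact: measurable_cst.
  split; last by move=> n w; rewrite mulrC key.
  move=> eps eps0; exists C => n.
  have -> : [set w : O | C < `|C|] = set0.
    by apply/seteqP; split => w //=; rewrite ger0_norm // ltxx.
  by rewrite measure0 lee_fin ltW.
move=> eps eps0.
have C1 : 0 < C + 1 by rewrite ltr_wpDl.
have e0 : 0 < eps / (C + 1) by rewrite divr_gt0.
have := hcvg _ e0.
have mdiff n : measurable_fun setT (fun w => ph n w - p n w).
  apply: measurable_funB; apply: measurable_funB => //.
    exact: measurable_H.
  exact: (measurable_H Q Z mZ (T n) (fun _ => lam) (hT n) (fun j => measurable_cst _)).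
have mnorm n : measurable_fun setT (fun w => eucl_norm (fun j => lamh n w j - lam j)).
  rewrite /eucl_norm; apply: (measurableT_comp (continuous_measurable_fun (@sqrt_continuous R))).
  apply: measurable_sum => j; apply: measurable_funX; apply: measurable_funB => //.
apply: squeeze_cvge; last exact: cvg_cst.
apply: nearW => n; apply/andP; split; first exact: measure_ge0.
apply: le_measure; rewrite ?inE.
- apply: meas_lt_set; apply: measurableT_comp; first exact: normr_measurable.
  by apply: measurable_funB.
- apply: meas_lt_set; apply: measurableT_comp; first exact: normr_measurable.
  by apply: measurable_funB.
move=> w /=; rewrite !subr0 => h.
rewrite ltr_pdivrMr //.
apply: lt_le_trans h _; apply: le_trans (key n w) _.
rewrite mulrC ger0_norm ?sqrtr_ge0 // ler_wpM2l ?sqrtr_ge0 //.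
by rewrite lerDl.
Qed.
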